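(* Let $X$ be a regular, $\omega_1$-expandable, Baire $\sigma$-space. Then $dis(X)\geq\Delta(X)$.
   Context: All spaces are Hausdorff. $dis(X)$ is the least number of discrete subspaces needed to cover $X$; $\Delta(X)$ is the least cardinality of a non-empty open subset of $X$. A $\sigma$-space is a space having a $\sigma$-discrete network (a network being a family $\mathcal{N}$ of subsets such that for every open $U$ and $x\in U$ there is $N\in\mathcal{N}$ with $x\in N\subseteq U$). For a collection $\mathcal{G}$ of subsets, $ord(x,\mathcal{G})=|\{G\in\mathcal{G}:x\in G\}|$. $X$ is $\omega_1$-expandable if for every closed discrete set $D\subseteq X$ there is a family $\mathcal{G}=\{U_d: d\in D\}$ of open sets with $U_d\cap D=\{d\}$ for each $d\in D$ and $ord(x,\mathcal{G})\leq\omega_1$ for every $x\in X$. *)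

(* Defs.v *)
From Stdlib Require Import Classical.

Definition set (X : Type) := X -> Prop.

Record topology (X : Type) := Topology {
  open : set X -> Prop;
  open_full : open (fun _ => True);
  open_inter : forall U V, open U -> open V -> open (fun x => U x /\ V x);
  open_union : forall F : set (set X), (forall U, F U -> open U) ->
                 open (fun x => exists U, F U /\ U x)
}.
Arguments open {X} t U.

Section Topo.
Context {X : Type} (t : topology X).

Definition closed (C : set X) : Prop := open t (fun x => ~ C x).

Definition closure (A : set X) : set X :=
  fun x => forall U, open t U -> U x -> exists y, U y /\ A y.

Definition dense (A : set X) : Prop := forall x, closure A x.

Definition hausdorff : Prop :=
  forall x y, x <> y -> exists U V, open t U /\ open t V /\ U x /\ V y /\
    (forall z, ~ (U z /\ V z)).

Definition regular : Prop :=
  forall (C : set X) x, closed C -> ~ C x ->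
    exists U V, open t U /\ open t V /\ U x /\ (forall z, C z -> V z) /\
      (forall z, ~ (U z /\ V z)).

Definition baire : Prop :=
  forall G : nat -> set X, (forall n, open t (G n)) -> (forall n, dense (G n)) ->
    dense (fun x => forall n, G n x).

Definition discrete_subspace (A : set X) : Prop :=
  forall x, A x -> exists U, open t U /\ U x /\ (forall y, U y -> A y -> y = x).

Definition closed_discrete (D : set X) : Prop := closed D /\ discrete_subspace D.

Definition discrete_family (F : set (set X)) : Prop :=
  forall x, exists W, open t W /\ W x /\
    (forall N1 N2, F N1 -> F N2 -> (exists y, W y /\ N1 y) ->
       (exists y, W y /\ N2 y) -> N1 = N2).

Definition network (F : set (set X)) : Prop :=
  forall U x, open t U -> U x -> exists N, F N /\ N x /\ (forall y, N y -> U y).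

Definition sigma_space : Prop :=
  exists Fn : nat -> set (set X), (forall n, discrete_family (Fn n)) /\
    network (fun N => exists n, Fn n N).
End Topo.

Definition countable_set {T : Type} (S : set T) : Prop :=
  exists f : T -> nat, forall x y, S x -> S y -> f x = f y -> x = y.

(* |S| <= omega_1 : S carries a well-order all of whose proper initial
   segments are countable (i.e. its order type is <= omega_1). *)
Definition card_le_omega1 {T : Type} (S : set T) : Prop :=
  exists R : T -> T -> Prop,
    (forall x, S x -> ~ R x x) /\
    (forall x y z, S x -> S y -> S z -> R x y -> R y z -> R x z) /\
    (forall x y, S x -> S y -> x = y \/ R x y \/ R y x) /\
    (forall P : set T, (forall x, P x -> S x) -> (exists x, P x) ->
        exists m, P m /\ forall x, P x -> ~ R x m) /\
    (forall y, S y -> countable_set (fun x => S x /\ R x y)).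

Definition omega1_expandable {X : Type} (t : topology X) : Prop :=
  forall D : set X, closed_discrete t D ->
    exists U : X -> set X,
      (forall d, D d -> open t (U d)) /\
      (forall d, D d -> forall y, (U d y /\ D y) <-> y = d) /\
      (forall x, card_le_omega1 (fun d => D d /\ U d x)).

(* dis(X) >= Delta(X): for every cover of X by discrete subspaces indexed by
   a type I, some non-empty open set has cardinality <= |I|. *)
Definition dis_ge_Delta {X : Type} (t : topology X) : Prop :=
  forall (I : Type) (A : I -> set X),
    (forall i, discrete_subspace t (A i)) -> (forall x, exists i, A i x) ->
    exists U : set X, open t U /\ (exists x, U x) /\
      exists f : X -> I, forall x y, U x -> U y -> f x = f y -> x = y.

(* Main.v *)
Require Import Defs.
From Stdlib Require Import Classical ClassicalEpsilon FunctionalExtensionality PropExtensionality ProofIrrelevance Cantor.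

Definition sub {T} (A B : set T) := forall x, A x -> B x.
Definition is_chain {T} (C : set (set T)) := forall A B, C A -> C B -> sub A B \/ sub B A.
Definition bigU {T} (C : set (set T)) : set T := fun x => exists A, C A /\ A x.

Lemma set_ext {T} (A B : set T) : sub A B -> sub B A -> A = B.
Proof.
  intros H1 H2; apply functional_extensionality; intro x;
  apply propositional_extensionality; split; auto.
Qed.

Section Zorn.
Variable T : Type.
Variable F : set (set T).
Variable M0 : set T.
Hypothesis FM0 : F M0.
Hypothesis Fchain : forall C, (forall A, C A -> F A) -> (exists A, C A) -> is_chain C -> F (bigU C).

Lemma zorn : exists M, F M /\ sub M0 M /\ forall N, F N -> sub M N -> sub N M.
Proof.
  apply NNPP; intro Hno.
  assert (Hstep : forall M, F M -> sub M0 M -> exists N, F N /\ sub M N /\ ~ sub N M).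
  { intros M FM HM. apply NNPP; intro H. apply Hno. exists M. split; [|split]; auto.
    intros N FN HMN. apply NNPP; intro HNM. apply H. exists N; auto. }
  set (g := fun M : set T => epsilon (inhabits M) (fun N => F N /\ sub M N /\ ~ sub N M)).
  assert (gspec : forall M, F M -> sub M0 M -> F (g M) /\ sub M (g M) /\ ~ sub (g M) M).
  { intros M FM HM. unfold g. apply epsilon_spec. auto. }
  set (closedF := fun (Af : set (set T)) => Af M0 /\ (forall A, Af A -> Af (g A)) /\
        (forall C, (forall A, C A -> Af A) -> (exists A, C A) -> is_chain C -> Af (bigU C))).
  set (tower := fun A => forall Af, closedF Af -> Af A).
  assert (tcl : closedF tower).
  { split; [|split].
    - intros Af [H _]; exact H.
    - intros A HA Af HAf. pose proof HAf as (_ & H & _). apply H, HA, HAf.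
    - intros C HC Hne Hch Af HAf. pose proof HAf as (_ & _ & H).
      apply H; auto. intros A HA; apply HC; auto. }
  assert (tind : forall Af, closedF (fun A => tower A /\ Af A) -> forall A, tower A -> Af A).
  { intros Af HAf A HA. apply (HA _ HAf). }
  assert (tG0 : forall A, tower A -> F A /\ sub M0 A).
  { apply tind. split; [|split].
    - split; [apply (proj1 tcl)|]. split; auto. intros x; auto.
    - intros A [HA [FA HM]]. split; [apply (proj1 (proj2 tcl)); auto|].
      destruct (gspec A FA HM) as (G1 & G2 & _). split; auto. intros x Hx; auto.
    - intros C HC Hne Hch. split.
      + apply (proj2 (proj2 tcl)); auto. intros A HA; apply HC; auto.
      + split. apply Fchain; auto. intros A HA; apply HC; auto.
        destruct Hne as [A HA]. intros x Hx. exists A. split; auto. apply (HC A HA); auto. }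
  assert (gsp : forall A, tower A -> sub A (g A) /\ ~ sub (g A) A).
  { intros A HA. destruct (tG0 A HA) as [FA HM]. destruct (gspec A FA HM) as (_ & G2 & G3); auto. }
  set (extreme := fun c => forall A, tower A -> sub A c -> ~ sub c A -> sub (g A) c).
  assert (L1 : forall c, tower c -> extreme c -> forall A, tower A -> sub A c \/ sub (g c) A).
  { intros c Hc Hex. apply tind. split; [|split].
    - split; [apply (proj1 tcl)|]. left. apply tG0; auto.
    - intros A [HA H1]; cbv beta; split; [apply (proj1 (proj2 tcl)); auto|]; destruct H1 as [H1|H1].
      + destruct (classic (sub c A)) as [H2|H2].
        * pose proof (set_ext A c H1 H2) as E. subst A. right. intros x; auto.
        * left. apply Hex; auto.
      + right. intros x Hx. apply (proj1 (gsp A HA)). auto.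
    - intros C HC Hne Hch. split. apply (proj2 (proj2 tcl)); auto. intros A HA; apply HC; auto.
      destruct (classic (forall A, C A -> sub A c)) as [H|H].
      + left. intros x [A [HA Hx]]. apply (H A HA); auto.
      + apply not_all_ex_not in H. destruct H as [A H].
        apply imply_to_and in H. destruct H as [HA H].
        destruct (proj2 (HC A HA)) as [H'|H']; [contradiction|].
        right. intros x Hx. exists A; split; auto. }
  assert (L2 : forall c, tower c -> extreme c).
  { apply tind. split; [|split].
    - split; [apply (proj1 tcl)|]. intros A HA H1 H2. exfalso. apply H2. apply tG0; auto.
    - intros c [Hc Hex]. split; [apply (proj1 (proj2 tcl)); auto|].
      intros A HA H1 H2. destruct (L1 c Hc Hex A HA) as [H3|H3]; [|contradiction].
      destruct (classic (sub c A)) as [H4|H4].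
      + rewrite (set_ext A c H3 H4). intros x; auto.
      + intros x Hx. apply (proj1 (gsp c Hc)). apply (Hex A HA H3 H4); auto.
    - intros C HC Hne Hch. split. apply (proj2 (proj2 tcl)); auto. intros A HA; apply HC; auto.
      intros A HA H1 H2.
      assert (Hx : exists x, bigU C x /\ ~ A x).
      { apply NNPP; intro H. apply H2. intros x Hx. apply NNPP; intro H'. apply H; eauto. }
      destruct Hx as [x [[c' [Hc' Hxc]] HxA]].
      destruct (HC c' Hc') as [Tc' Ec'].
      destruct (L1 c' Tc' Ec' A HA) as [H3|H3].
      + assert (H4 : ~ sub c' A) by (intro H4; apply HxA; auto).
        intros y Hy. exists c'. split; auto. apply (Ec' A HA H3 H4); auto.
      + exfalso. apply HxA. apply H3. apply (proj1 (gsp c' Tc')). auto. }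
  assert (Hch : is_chain tower).
  { intros A B HA HB. destruct (L1 B HB (L2 B HB) A HA) as [H|H]; [left; auto|].
    right. intros x Hx. apply H. apply (proj1 (gsp B HB)); auto. }
  assert (Tu : tower (bigU tower)).
  { apply (proj2 (proj2 tcl)); auto. exists M0. apply (proj1 tcl). }
  assert (Tgu : tower (g (bigU tower))) by (apply (proj1 (proj2 tcl)); auto).
  apply (proj2 (gsp _ Tu)). intros x Hx. exists (g (bigU tower)); auto.
Qed.
End Zorn.
Arguments zorn {T}.

Definition injon {A B} (P : set A) (Q : set B) (f : A -> B) :=
  (forall x, P x -> Q (f x)) /\ (forall x y, P x -> P y -> f x = f y -> x = y).

Lemma comparability {A B} (a0 : A) (b0 : B) (P : set A) (Q : set B) :
  (exists f, injon P Q f) \/ (exists g, injon Q P g).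
Proof.
  set (F := fun G : set (A * B) =>
    (forall a b, G (a,b) -> P a /\ Q b) /\
    (forall a b b', G (a,b) -> G (a,b') -> b = b') /\
    (forall a a' b, G (a,b) -> G (a',b) -> a = a')).
  destruct (zorn F (fun _ => False)) as [M [[M1 [M2 M3]] [_ Mmax]]].
  - split; [|split]; intros; contradiction.
  - intros C HC _ Hch. split; [|split].
    + intros a b [G [HG H]]. apply (proj1 (HC G HG)); auto.
    + intros a b b' [G [HG H]] [G' [HG' H']].
      destruct (Hch G G' HG HG') as [S|S].
      * apply (proj1 (proj2 (HC G' HG')) a); auto.
      * apply (proj1 (proj2 (HC G HG)) a); auto.
    + intros a a' b [G [HG H]] [G' [HG' H']].
      destruct (Hch G G' HG HG') as [S|S].
      * apply (proj2 (proj2 (HC G' HG')) a a' b); auto.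
      * apply (proj2 (proj2 (HC G HG)) a a' b); auto.
  - destruct (classic (forall a, P a -> exists b, M (a,b))) as [Hd|Hd].
    + left. exists (fun a => epsilon (inhabits b0) (fun b => M (a,b))). split.
      * intros x Px. apply (M1 x). apply (epsilon_spec (inhabits b0) (fun b => M (x,b))). auto.
      * intros x y Px Py E. apply (M3 x y (epsilon (inhabits b0) (fun b => M (y,b)))).
        rewrite <- E. apply (epsilon_spec (inhabits b0) (fun b => M (x,b))). auto.
        apply (epsilon_spec (inhabits b0) (fun b => M (y,b))). auto.
    + destruct (classic (forall b, Q b -> exists a, M (a,b))) as [Hr|Hr].
      * right. exists (fun b => epsilon (inhabits a0) (fun a => M (a,b))). split.
        -- intros x Px. apply (M1 _ x). apply (epsilon_spec (inhabits a0) (fun a => M (a,x))). auto.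
        -- intros x y Px Py E. apply (M2 (epsilon (inhabits a0) (fun a => M (a,y))) x y).
           rewrite <- E. apply (epsilon_spec (inhabits a0) (fun a => M (a,x))). auto.
           apply (epsilon_spec (inhabits a0) (fun a => M (a,y))). auto.
      * exfalso.
        apply not_all_ex_not in Hd. destruct Hd as [a Ha]. apply imply_to_and in Ha. destruct Ha as [Pa Ha].
        apply not_all_ex_not in Hr. destruct Hr as [b Hb]. apply imply_to_and in Hb. destruct Hb as [Qb Hb].
        assert (HN : F (fun p => M p \/ p = (a,b))).
        { split; [|split].
          - intros a' b' [H|H]; auto. inversion H; subst; auto.
          - intros a' b1 b2 [H1|H1] [H2|H2].
            + eauto.
            + inversion H2; subst. exfalso; eauto.
            + inversion H1; subst. exfalso; eauto.
            + inversion H1; inversion H2; subst; auto.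
          - intros a1 a2 b' [H1|H1] [H2|H2].
            + eauto.
            + inversion H2; subst. exfalso; eauto.
            + inversion H1; subst. exfalso; eauto.
            + inversion H1; inversion H2; subst; auto. }
        assert (HM : M (a,b)). { apply (Mmax _ HN). intros p Hp; auto. auto. }
        eauto.
Qed.

Lemma chain_two {T} (C : set (set T)) (Hch : is_chain C) A B :
  C A -> C B -> exists L, C L /\ sub A L /\ sub B L.
Proof.
  intros HA HB. destruct (Hch A B HA HB) as [H|H].
  - exists B. split; auto. split; auto. intros x; auto.
  - exists A. split; auto. split; auto. intros x; auto.
Qed.

Lemma to_nat_inj p q : to_nat p = to_nat q -> p = q.
Proof. intro H. rewrite <- (cancel_of_to p), <- (cancel_of_to q), H. reflexivity. Qed.

Definition emi := excluded_middle_informative.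
Definition tn (n m : nat) := to_nat (n,m).
Lemma tn_inj a b c d : tn a b = tn c d -> a = c /\ b = d.
Proof. unfold tn. intro H. apply to_nat_inj in H. inversion H; auto. Qed.
Global Opaque tn.

Section Hess.
Variable I : Type.
Variable e : nat -> I.
Hypothesis he : forall n m, e n = e m -> n = m.

Definition Dm (G : set (I*I*I)) x := exists w, G (x,x,w).
Definition GoodH (G : set (I*I*I)) :=
  (forall x y z z', G (x,y,z) -> G (x,y,z') -> z = z') /\
  (forall x y z x' y', G (x,y,z) -> G (x',y',z) -> x = x' /\ y = y') /\
  (forall x y z, G (x,y,z) -> Dm G x /\ Dm G y /\ Dm G z) /\
  (forall x y, Dm G x -> Dm G y -> exists z, G (x,y,z)).

Definition HM0 : set (I*I*I) := fun p => exists n m, p = (e n, e m, e (tn (n) (m))).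

Lemma good_M0 : GoodH HM0.
Proof.
  split; [|split; [|split]].
  - intros x y z z' [n [m H]] [n' [m' H']]. inversion H; inversion H'; subst.
    apply he in H4. apply he in H5. subst. auto.
  - intros x y z x' y' [n [m H]] [n' [m' H']]. inversion H; inversion H'; subst.
    apply he, tn_inj in H6. destruct H6; subst. auto.
  - intros x y z [n [m H]]. inversion H; subst.
    split; [|split].
    + exists (e (tn (n) (n))). exists n, n. auto.
    + exists (e (tn (m) (m))). exists m, m. auto.
    + exists (e (tn (tn n m) (tn n m))). exists (tn n m), (tn n m). auto.
  - intros x y [w [n [m H]]] [w' [n' [m' H']]]. inversion H; inversion H'; subst.
    exists (e (tn n n')). exists n, n'. auto.
Qed.

Lemma good_chain : forall C, (forall A, C A -> GoodH A) -> (exists A, C A) -> is_chain C -> GoodH (bigU C).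
Proof.
  intros C HC _ Hch. split; [|split; [|split]].
  - intros x y z z' [A [HA H]] [B [HB H']].
    destruct (chain_two C Hch A B HA HB) as [L [HL [S1 S2]]].
    apply (proj1 (HC L HL) x y); auto.
  - intros x y z x' y' [A [HA H]] [B [HB H']].
    destruct (chain_two C Hch A B HA HB) as [L [HL [S1 S2]]].
    apply (proj1 (proj2 (HC L HL)) x y z); auto.
  - intros x y z [A [HA H]].
    destruct (proj1 (proj2 (proj2 (HC A HA))) x y z H) as [[w1 H1] [[w2 H2] [w3 H3]]].
    split; [|split]; [exists w1 | exists w2 | exists w3]; exists A; auto.
  - intros x y [w [A [HA H]]] [w' [B [HB H']]].
    destruct (chain_two C Hch A B HA HB) as [L [HL [S1 S2]]].
    destruct (proj2 (proj2 (proj2 (HC L HL))) x y) as [z Hz].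
    exists w; auto. exists w'; auto. exists z, L; auto.
Qed.

Lemma hessenberg : exists g : I * I -> I, forall p q, g p = g q -> p = q.
Proof.
  destruct (zorn GoodH HM0 good_M0 good_chain) as [M [[M1 [M2 [M3 M4]]] [HM0M Mmax]]].
  set (D := Dm M).
  set (F := fun u v => epsilon (inhabits (e 0)) (fun z => M (u,v,z))).
  assert (Fspec : forall u v, D u -> D v -> M (u,v,F u v)).
  { intros u v Du Dv. destruct (M4 u v Du Dv) as [z Hz].
    apply (epsilon_spec (inhabits (e 0)) (fun z => M (u,v,z))). eauto. }
  assert (FD : forall u v, D u -> D v -> D (F u v)).
  { intros u v Du Dv. apply (M3 u v). apply Fspec; auto. }
  assert (Finj : forall u v u' v', D u -> D v -> D u' -> D v' -> F u v = F u' v' -> u = u' /\ v = v').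
  { intros u v u' v' Du Dv Du' Dv' E. apply (M2 u v (F u v)). apply Fspec; auto.
    rewrite E. apply Fspec; auto. }
  assert (eD : forall k, D (e k)).
  { intro k. exists (e (tn (k) (k))). apply HM0M. exists k, k. auto. }
  assert (e01 : e 0 <> e 1) by (intro H; apply he in H; discriminate).
  assert (e02 : e 0 <> e 2) by (intro H; apply he in H; discriminate).
  assert (e12 : e 1 <> e 2) by (intro H; apply he in H; discriminate).
  destruct (comparability (e 0) (e 0) (fun x => ~ D x) D) as [[f [f1 f2]]|[h [h1 h2]]].
  - set (phi := fun x => if emi (D x) then F x (e 0) else F (f x) (e 1)).
    assert (phiD : forall x, D (phi x)).
    { intro x. unfold phi. destruct (emi (D x)); apply FD; auto. }
    assert (phiI : forall x y, phi x = phi y -> x = y).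
    { intros x y E. unfold phi in E.
      destruct (emi (D x)) as [Hx|Hx]; destruct (emi (D y)) as [Hy|Hy];
        apply Finj in E; auto; destruct E as [E1 E2]; try (exfalso; auto; fail).
      - auto.
      - apply f2; auto. }
    exists (fun p => F (phi (fst p)) (phi (snd p))).
    intros [x y] [x' y'] E. simpl in E. apply Finj in E; auto. destruct E as [E1 E2].
    apply phiI in E1. apply phiI in E2. subst; auto.
  - exfalso.
    set (Bs := fun x => exists d, D d /\ h d = x).
    set (hinv := fun x => epsilon (inhabits (e 0)) (fun d => D d /\ h d = x)).
    assert (hinvS : forall x, Bs x -> D (hinv x) /\ h (hinv x) = x).
    { intros x Hx. apply (epsilon_spec (inhabits (e 0)) (fun d => D d /\ h d = x)). auto. }
    assert (BsnD : forall x, Bs x -> ~ D x).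
    { intros x [d [Dd E]]. subst. apply h1; auto. }
    set (Dn := fun x => D x \/ Bs x).
    assert (DnB : forall x, Dn x -> ~ D x -> Bs x).
    { intros x [H|H] H'; auto. contradiction. }
    set (tg := fun x y => if emi (D x) then e 0 else if emi (D y) then e 1 else e 2).
    set (ca := fun x (y:I) => if emi (D x) then x else hinv x).
    set (cb := fun x y => if emi (D x) then hinv y else if emi (D y) then y else hinv y).
    set (code := fun x y => F (F (tg x y) (ca x y)) (cb x y)).
    set (NC := fun x y => Dn x /\ Dn y /\ ~ (D x /\ D y)).
    assert (tgD : forall x y, D (tg x y)).
    { intros x y. unfold tg. destruct (emi (D x)); [|destruct (emi (D y))]; auto. }
    assert (caD : forall x y, Dn x -> D (ca x y)).
    { intros x y Hx. unfold ca. destruct (emi (D x)); auto. apply hinvS, DnB; auto. }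
    assert (cbD : forall x y, NC x y -> D (cb x y)).
    { intros x y [Hx [Hy Hn]]. unfold cb. destruct (emi (D x)); [|destruct (emi (D y))]; auto;
      apply hinvS, DnB; auto; intro; apply Hn; auto. }
    assert (codeD : forall x y, NC x y -> D (code x y)).
    { intros x y [Hx [Hy Hn]]. unfold code. apply FD; [apply FD| apply cbD; split; auto]; auto. }
    assert (hinvI : forall x y, Bs x -> Bs y -> hinv x = hinv y -> x = y).
    { intros x y Hx Hy E. rewrite <- (proj2 (hinvS x Hx)), <- (proj2 (hinvS y Hy)), E. auto. }
    assert (codeI : forall x y x' y', NC x y -> NC x' y' -> code x y = code x' y' -> x = x' /\ y = y').
    { intros x y x' y' [Hx [Hy Hn]] [Hx' [Hy' Hn']] E. unfold code in E.
      apply Finj in E; [|apply FD|apply cbD; split; auto|apply FD|apply cbD; split; auto]; auto.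
      destruct E as [E1 E3]. apply Finj in E1; auto. destruct E1 as [E1 E2].
      unfold tg, ca, cb in *.
      destruct (emi (D x)) as [Dx|Dx]; [|destruct (emi (D y)) as [Dy|Dy]];
      (destruct (emi (D x')) as [Dx'|Dx']; [|destruct (emi (D y')) as [Dy'|Dy']]);
      try (exfalso; apply he in E1; discriminate).
      - subst. split; auto. apply hinvI; auto; apply DnB; auto.
      - split; [apply hinvI; auto; apply DnB; auto|auto].
      - split; apply hinvI; auto; apply DnB; auto. }
    set (N := fun p : I*I*I => let '(x,y,z) := p in M (x,y,z) \/ (NC x y /\ z = h (code x y))).
    assert (MD : forall x y z, M (x,y,z) -> D x /\ D y /\ D z).
    { intros x y z H. apply M3 in H. exact H. }
    assert (hB : forall x y, NC x y -> Bs (h (code x y))).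
    { intros x y H. exists (code x y). split; auto. }
    assert (DmN1 : forall x, Dm N x -> Dn x).
    { intros x [w [H|[H _]]]. left. apply (MD x x w H). destruct H; auto. }
    assert (DmN2 : forall x, Dn x -> Dm N x).
    { intros x Hx. destruct (classic (D x)) as [Dx|Dx].
      - destruct Dx as [w Hw]. exists w. left; auto.
      - exists (h (code x x)). right. split; auto. split; auto. split; auto. intros [? ?]; auto. }
    assert (GN : GoodH N).
    { split; [|split; [|split]].
      - intros x y z z' [H|[H1 H2]] [H'|[H1' H2']].
        + eauto.
        + exfalso. destruct (MD _ _ _ H) as [? [? ?]]. unfold NC in H1'; destruct H1' as [_ [_ Hn3]]. auto.
        + exfalso. destruct (MD _ _ _ H') as [? [? ?]]. unfold NC in H1; destruct H1 as [_ [_ Hn3]]. auto.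
        + subst; auto.
      - intros x y z x' y' [H|[H1 H2]] [H'|[H1' H2']].
        + eauto.
        + exfalso. destruct (MD _ _ _ H) as [? [? ?]]. subst z. apply (BsnD (h (code x' y'))); auto.
        + exfalso. destruct (MD _ _ _ H') as [? [? ?]]. subst z. apply (BsnD (h (code x y))); auto.
        + subst. apply codeI; auto.
      - intros x y z [H|[H1 H2]].
        + destruct (MD _ _ _ H) as [? [? ?]]. split; [|split]; apply DmN2; left; auto.
        + unfold NC in H1; destruct H1 as [Hx [Hy Hn]]. split; [|split]; apply DmN2; auto.
          subst. right. apply hB. split; auto.
      - intros x y Hx Hy. apply DmN1 in Hx. apply DmN1 in Hy.
        destruct (classic (D x /\ D y)) as [[Dx Dy]|Hn].
        + destruct (M4 x y Dx Dy) as [z Hz]. exists z. left; auto.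
        + exists (h (code x y)). right. split; auto. split; auto. }
    assert (MN : sub M N). { intros [[x y] z] H. left; auto. }
    pose proof (Mmax N GN MN) as NM.
    set (x := h (e 0)).
    assert (Bx : Bs x) by (exists (e 0); auto).
    assert (Nx : N (x,x,h (code x x))).
    { right. split; auto. split; [right; auto|split; [right; auto|]]. intros [H _]. apply (BsnD x); auto. }
    apply NM in Nx. destruct (MD _ _ _ Nx) as [Dx _]. apply (BsnD x); auto.
Qed.
End Hess.
Arguments hessenberg {I}.

Lemma omega1_inj {I T : Type} (i0 : I) (P : set T) (hP : card_le_omega1 P)
  (unc : ~ exists c : I -> nat, forall x y, c x = c y -> x = y)
  (pr : I * nat -> I) (hpr : forall p q, pr p = pr q -> p = q) :
  exists k : T -> I, forall x y, P x -> P y -> k x = k y -> x = y.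
Proof.
  destruct (classic (exists t, P t)) as [[t0 Pt0]|Hne];
    [|exists (fun _ => i0); intros x y Px; exfalso; eauto].
  destruct (comparability t0 i0 P (fun _ => True)) as [[f [_ f2]]|[h [h1 h2]]].
  - exists f. intros x y Px Py E. apply f2; auto.
  - destruct hP as [R [Rirr [Rtr [Rtot [Rwf Rcnt]]]]].
    assert (ex : forall y, P y -> exists a, h a = y \/ R y (h a)).
    { intros y Py. apply NNPP; intro Hn. apply unc.
      destruct (Rcnt y Py) as [c Hc].
      assert (seg : forall a, P (h a) /\ R (h a) y).
      { intro a. split; auto. destruct (Rtot (h a) y (h1 a Logic.I) Py) as [E|[E|E]]; auto;
        exfalso; apply Hn; exists a; auto. }
      exists (fun a => c (h a)). intros a b E. apply h2; auto. }
    set (az := fun y => epsilon (inhabits i0) (fun a => h a = y \/ R y (h a))).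
    assert (azS : forall y, P y -> h (az y) = y \/ R y (h (az y))).
    { intros y Py. apply (epsilon_spec (inhabits i0) (fun a => h a = y \/ R y (h a))). auto. }
    set (cz := fun z => epsilon (inhabits (fun _:T => 0)) (fun c => forall x y, (P x /\ R x z) -> (P y /\ R y z) -> c x = c y -> x = y)).
    assert (czS : forall z, P z -> forall x y, (P x /\ R x z) -> (P y /\ R y z) -> cz z x = cz z y -> x = y).
    { intros z Pz. apply (epsilon_spec (inhabits (fun _:T => 0)) (fun c => forall x y, (P x /\ R x z) -> (P y /\ R y z) -> c x = c y -> x = y)).
      apply Rcnt; auto. }
    set (cz' := fun z x => if emi (x = z) then 0 else S (cz z x)).
    exists (fun y => pr (az y, cz' (h (az y)) y)).
    intros y y' Py Py' E. apply hpr in E. injection E as Ea Ec.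
    rewrite <- Ea in Ec. pose proof (azS y Py) as S1. pose proof (azS y' Py') as S2.
    rewrite <- Ea in S2. set (z := h (az y)) in *. unfold cz' in Ec.
    destruct (emi (y = z)) as [Hy|Hy]; destruct (emi (y' = z)) as [Hy'|Hy'].
    + congruence.
    + discriminate.
    + discriminate.
    + injection Ec as Ec. apply (czS z (h1 _ Logic.I)); auto.
      * split; auto. destruct S1; auto. congruence.
      * split; auto. destruct S2; auto. congruence.
Qed.

Lemma open_of_local {X} (t : topology X) (S : set X) :
  (forall x, S x -> exists O, open t O /\ O x /\ sub O S) -> open t S.
Proof.
  intro H. assert (E : S = (fun x => exists U, (fun U => open t U /\ sub U S) U /\ U x)).
  { apply set_ext. intros x Hx. destruct (H x Hx) as [O [? [? ?]]]. exists O; auto.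
    intros x [U [[_ HU] Hx]]. auto. }
  rewrite E. apply open_union. intros U [HU _]; auto.
Qed.

Theorem theorem2 (X : Type) (t : topology X) :
  inhabited X -> hausdorff t -> regular t -> omega1_expandable t ->
  baire t -> sigma_space t -> dis_ge_Delta t.
Proof.
  intros [x0] Hhaus _ Hexp Hbaire [Fn [Fdisc Fnet]] I A Adisc Acov.
  destruct (Acov x0) as [i0 _].
  set (ix := fun x => epsilon (inhabits i0) (fun i => A i x)).
  assert (ixS : forall x, A (ix x) x).
  { intro x. apply (epsilon_spec (inhabits i0) (fun i => A i x)). apply Acov. }
  set (Ux := fun x => epsilon (inhabits (fun _:X => True))
        (fun U => open t U /\ U x /\ forall y, U y -> A (ix x) y -> y = x)).
  assert (UxS : forall x, open t (Ux x) /\ Ux x x /\ forall y, Ux x y -> A (ix x) y -> y = x).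
  { intro x. apply (epsilon_spec (inhabits (fun _:X => True))
        (fun U => open t U /\ U x /\ forall y, U y -> A (ix x) y -> y = x)).
    apply Adisc. apply ixS. }
  set (nN := fun x => epsilon (inhabits (0, fun _:X => True))
        (fun p => Fn (fst p) (snd p) /\ snd p x /\ sub (snd p) (Ux x))).
  assert (nNS : forall x, Fn (fst (nN x)) (snd (nN x)) /\ snd (nN x) x /\ sub (snd (nN x)) (Ux x)).
  { intro x. apply (epsilon_spec (inhabits (0, fun _:X => True))
        (fun p => Fn (fst p) (snd p) /\ snd p x /\ sub (snd p) (Ux x))).
    destruct (UxS x) as [HU [HUx _]].
    destruct (Fnet (Ux x) x HU HUx) as [N [[n HN] [Nx NU]]].
    exists (n, N). simpl. split; auto. }
  set (nx := fun x => fst (nN x)).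
  assert (P1 : forall z m, exists W, open t W /\ W z /\
            forall x y, W x -> W y -> nx x = m -> nx y = m -> ix x = ix y -> x = y).
  { intros z m. destruct (Fdisc m z) as [W [HW [Wz Hd]]]. exists W. split; auto. split; auto.
    intros x y Wx Wy Hx Hy Hi.
    destruct (nNS x) as [Fx [Nx NUx]]. destruct (nNS y) as [Fy [Ny NUy]].
    unfold nx in Hx, Hy. rewrite Hx in Fx. rewrite Hy in Fy.
    assert (E : snd (nN x) = snd (nN y)).
    { apply (Hd _ _ Fx Fy). exists x; auto. exists y; auto. }
    symmetry. apply (proj2 (proj2 (UxS x))). apply NUx. rewrite E; auto. rewrite Hi; apply ixS. }
  set (E := fun i m x => ix x = i /\ nx x = m).
  assert (Ecd : forall i m, closed_discrete t (E i m)).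
  { intros i m. split.
    - unfold closed. apply open_of_local. intros z Hz.
      destruct (P1 z m) as [W [HW [Wz HWp]]].
      destruct (classic (exists x, W x /\ E i m x)) as [[x [Wx Ex]]|Hn].
      + assert (xz : z <> x) by (intro; subst; auto).
        destruct (Hhaus z x xz) as [U [V [HU [HV [Uz [Vx Hd]]]]]].
        exists (fun y => W y /\ U y). split. apply open_inter; auto. split. split; auto.
        intros y [Wy Uy] Ey.
        assert (y = x) by (apply HWp; auto; destruct Ey, Ex; congruence). subst.
        apply (Hd x); auto.
      + exists W. split; auto. split; auto. intros y Wy Ey. apply Hn; eauto.
    - intros x Ex. destruct (P1 x m) as [W [HW [Wx HWp]]]. exists W. split; auto. split; auto.
      intros y Wy Ey. apply HWp; auto; destruct Ey, Ex; congruence. }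
  destruct (classic (exists O x, open t O /\ O x /\ forall y, O y -> y = x)) as [[O [x [HO [Ox Hiso]]]]|Hniso].
  { exists O. split; auto. split; [exists x; auto|]. exists (fun _ => i0).
    intros a b Ha Hb _. rewrite (Hiso a Ha), (Hiso b Hb). auto. }
  assert (Enoint : forall i m U x, open t U -> U x -> exists y, U y /\ ~ E i m y).
  { intros i m U x HU HUx. apply NNPP; intro Hn.
    assert (HE : forall y, U y -> E i m y).
    { intros y Uy. apply NNPP; intro H. apply Hn; eauto. }
    destruct (proj2 (Ecd i m) x (HE x HUx)) as [W [HW [Wx HWp]]].
    apply Hniso. exists (fun y => U y /\ W y), x. split. apply open_inter; auto.
    split. split; auto. intros y [Uy Wy]. apply HWp; auto. }
  destruct (classic (exists c : I -> nat, forall a b, c a = c b -> a = b)) as [[c Hc]|Hunc].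
  - exfalso.
    set (G := fun k x => forall i m, tn (c i) m = k -> ~ E i m x).
    assert (Gopen : forall k, open t (G k)).
    { intro k. apply open_of_local. intros x Gx.
      destruct (classic (exists i m, tn (c i) m = k)) as [[i [m Hk]]|Hn].
      - exists (fun y => ~ E i m y). split. apply (proj1 (Ecd i m)). split. apply Gx; auto.
        intros y Hy i' m' Hk'. rewrite <- Hk in Hk'. apply tn_inj in Hk'. destruct Hk' as [H1 H2].
        apply Hc in H1. subst; auto.
      - exists (fun _ => True). split. apply open_full. split; auto.
        intros y _ i m Hk. exfalso; eauto. }
    assert (Gdense : forall k, dense t (G k)).
    { intros k x U HU HUx.
      destruct (classic (exists i m, tn (c i) m = k)) as [[i [m Hk]]|Hn].
      - destruct (Enoint i m U x HU HUx) as [y [Uy Ey]]. exists y. split; auto.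
        intros i' m' Hk'. rewrite <- Hk in Hk'. apply tn_inj in Hk'. destruct Hk' as [H1 H2].
        apply Hc in H1. subst; auto.
      - exists x. split; auto. intros i m Hk. exfalso; eauto. }
    destruct (Hbaire G Gopen Gdense x0 (fun _ => True) (open_full _ t) Logic.I) as [y [_ Hy]].
    apply (Hy (tn (c (ix y)) (nx y)) (ix y) (nx y) eq_refl). split; auto.
  - destruct (comparability 0 i0 (fun _ : nat => True) (fun _ : I => True)) as [[e [_ he]]|[g [_ hg]]].
    2:{ exfalso. apply Hunc. exists g. intros a b H. apply hg; auto. }
    destruct (hessenberg e (fun n m H => he n m Logic.I Logic.I H)) as [g2 hg2].
    set (pr := fun p : I * nat => g2 (fst p, e (snd p))).
    assert (hpr : forall p q, pr p = pr q -> p = q).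
    { intros [a n] [b m] H. apply hg2 in H. injection H as H1 H2. apply he in H2; auto. subst; auto. }
    set (Q4 := fun q : I * nat * I * I =>
           g2 (pr (fst (fst (fst q)), snd (fst (fst q))), g2 (snd (fst q), snd q))).
    assert (hQ4 : forall p q, Q4 p = Q4 q -> p = q).
    { intros [[[a n] b] d] [[[a' n'] b'] d'] H. unfold Q4 in H; simpl in H.
      apply hg2 in H. injection H as H1 H2. apply hpr in H1. apply hg2 in H2.
      injection H1 as H1 H3. injection H2 as H2 H4. subst; auto. }
    set (H := fun m x => exists O, open t O /\ O x /\ forall y, O y -> nx y <> m).
    assert (Hopen : forall m, open t (H m)).
    { intro m. apply open_of_local. intros x [O [HO [Ox HOp]]]. exists O. split; auto. split; auto.
      intros y Oy. exists O; auto. }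
    assert (Hnd : exists m, ~ dense t (H m)).
    { apply NNPP; intro Hn. 
      assert (Hd : forall m, dense t (H m)) by (intro m; apply NNPP; intro; apply Hn; eauto).
      destruct (Hbaire H Hopen Hd x0 (fun _ => True) (open_full _ t) Logic.I) as [y [_ Hy]].
      destruct (Hy (nx y)) as [O [_ [Oy HOp]]]. apply (HOp y); auto. }
    destruct Hnd as [m Hm].
    assert (HU : exists U x, open t U /\ U x /\ ~ (exists y, U y /\ H m y)).
    { apply NNPP; intro Hn. apply Hm. intros x U HU HUx. apply NNPP; intro H'. apply Hn; eauto. }
    destruct HU as [U [x [HU [HUx HUn]]]].
    destruct (P1 x m) as [W [HW [Wx HWp]]].
    set (O := fun y => U y /\ W y).
    assert (HO : open t O) by (apply open_inter; auto).
    assert (Sdense : forall y, O y -> forall O', open t O' -> O' y -> exists s, O s /\ O' s /\ nx s = m).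
    { intros y Oy O' HO' O'y. apply NNPP; intro Hn. apply HUn. exists y. split. apply Oy.
      exists (fun z => O z /\ O' z). split. apply open_inter; auto. split. split; auto.
      intros z Hz E'. apply Hn. exists z. destruct Hz; auto. }
    set (Vexp := fun i m' => epsilon (inhabits (fun (_:X) (_:X) => True))
       (fun V => (forall d, E i m' d -> open t (V d)) /\ (forall d, E i m' d -> forall y, V d y /\ E i m' y <-> y = d)
                 /\ forall x, card_le_omega1 (fun d => E i m' d /\ V d x))).
    assert (VS : forall i m', (forall d, E i m' d -> open t (Vexp i m' d)) /\
               (forall d, E i m' d -> forall y, Vexp i m' d y /\ E i m' y <-> y = d)
               /\ forall x, card_le_omega1 (fun d => E i m' d /\ Vexp i m' d x)).
    { intros i m'. apply (epsilon_spec (inhabits (fun (_:X) (_:X) => True))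
       (fun V => (forall d, E i m' d -> open t (V d)) /\ (forall d, E i m' d -> forall y, V d y /\ E i m' y <-> y = d)
                 /\ forall x, card_le_omega1 (fun d => E i m' d /\ V d x))).
      apply Hexp. apply Ecd. }
    assert (Eself : forall y, E (ix y) (nx y) y) by (intro y; split; auto).
    set (sy := fun y => epsilon (inhabits x0) (fun s => O s /\ Vexp (ix y) (nx y) y s /\ nx s = m)).
    assert (syS : forall y, O y -> O (sy y) /\ Vexp (ix y) (nx y) y (sy y) /\ nx (sy y) = m).
    { intros y Oy. apply (epsilon_spec (inhabits x0) (fun s => O s /\ Vexp (ix y) (nx y) y s /\ nx s = m)).
      apply (Sdense y Oy (Vexp (ix y) (nx y) y)).
      - apply (proj1 (VS _ _)). apply Eself.
      - apply (proj2 (proj1 (proj2 (VS _ _)) y (Eself y) y)). auto. }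
    set (kk := fun s i m' => epsilon (inhabits (fun _:X => i0))
       (fun k => forall a b, (E i m' a /\ Vexp i m' a s) -> (E i m' b /\ Vexp i m' b s) -> k a = k b -> a = b)).
    assert (kkS : forall s i m' a b, (E i m' a /\ Vexp i m' a s) -> (E i m' b /\ Vexp i m' b s) ->
                   kk s i m' a = kk s i m' b -> a = b).
    { intros s i m'. apply (epsilon_spec (inhabits (fun _:X => i0))
       (fun k => forall a b, (E i m' a /\ Vexp i m' a s) -> (E i m' b /\ Vexp i m' b s) -> k a = k b -> a = b)).
      apply (omega1_inj i0 _ (proj2 (proj2 (VS i m')) s) Hunc pr hpr). }
    exists O. split; auto. split. exists x. split; auto.
    exists (fun y => Q4 (ix y, nx y, ix (sy y), kk (sy y) (ix y) (nx y) y)).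
    intros y y' Oy Oy' Eq. apply hQ4 in Eq. injection Eq as E1 E2 E3 E4.
    destruct (syS y Oy) as [[_ Ws] [Vs Ns]]. destruct (syS y' Oy') as [[_ Ws'] [Vs' Ns']].
    assert (Es : sy y = sy y') by (apply HWp; auto).
    rewrite <- Es, <- E1, <- E2 in E4.
    refine (kkS (sy y) (ix y) (nx y) y y' _ _ E4).
    + split; [apply Eself|exact Vs].
    + split; [split; congruence | rewrite E1, E2, Es; exact Vs'].
Qed.
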